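(* Let $m\in[1..\frac n2-1]$ and let $\tau=(\tau_i)_{i\in[1..n]}\in\{\frac1n,\frac12,1-\frac1n\}^n$. Let $x,y\in\{0,1\}^n$ be sampled independently from the distribution associated with $\tau$, and let $z$ be the winner of $x$ and $y$ with respect to $\mathrm{DLB}$ (the one with larger $\mathrm{DLB}$-value, chosen uniformly at random among the two in case of a tie). Then, conditioned on $\{\min\{\mathrm{DLB}(x),\mathrm{DLB}(y)\}\ge 2m\}$, we have $z_{2m+1}=1$ with probability $$p(\tau_{2m+1},\tau_{2m+2})=\tau_{2m+1}\left(-\tau_{2m+2}^2+3\tau_{2m+2}+(\tau_{2m+2}^2-3\tau_{2m+2}+1)\tau_{2m+1}\right).$$ If $\tau_{2m+1},\tau_{2m+2}\in\{\frac12,1-\frac1n\}$, then $p(\tau_{2m+1},\tau_{2m+2})\ge\tau_{2m+1}$. If moreover $\tau_{2m+1}=\frac12$ and $\tau_{2m+2}\in\{\frac12,1-\frac1n\}$, then $p(\tau_{2m+1},\tau_{2m+2})\ge\frac9{16}$.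
   Context: Let $n$ be an even positive integer. For $x\in\{0,1\}^n$ consider the blocks $(x_{2\ell+1},x_{2\ell+2})$, $\ell=0,\dots,\frac n2-1$. If $x\neq(1,\dots,1)$, let $m$ be the smallest $\ell$ with $x_{2\ell+1}\neq 1$ or $x_{2\ell+2}\neq 1$, and define $\mathrm{DLB}(x)=2m+1$ if $x_{2m+1}+x_{2m+2}=0$ and $\mathrm{DLB}(x)=2m$ if $x_{2m+1}+x_{2m+2}=1$; set $\mathrm{DLB}(1,\dots,1)=n$. The distribution on $\{0,1\}^n$ associated with a frequency vector $\tau\in[0,1]^n$ is the one in which each bit $x_i$ is independently $1$ with probability $\tau_i$ and $0$ otherwise. *)

(* Defs.v *)
(* Bit strings x in {0,1}^n are n.-tuple bool; paper index i (1-based)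
   corresponds to tuple position i-1 (0-based). *)
From HB Require Import structures.
From mathcomp Require Import all_boot all_order all_algebra.
Set Implicit Arguments. Unset Strict Implicit. Unset Printing Implicit Defensive.
Import Order.TTheory GRing.Theory Num.Theory.

Definition bit n (x : n.-tuple bool) (k : nat) : bool := nth false x k.

(* Blocks l = 0..n/2-1 consist of paper positions (2l+1, 2l+2), i.e. 0-based (2l, 2l+1). *)
Definition nonfull_blocks n (x : n.-tuple bool) : seq nat :=
  [seq l <- iota 0 n./2 | ~~ (bit x (2 * l) && bit x (2 * l).+1)].

Definition DLB n (x : n.-tuple bool) : nat :=
  match nonfull_blocks x with
  | [::] => n
  | m :: _ => if ~~ bit x (2 * m) && ~~ bit x (2 * m).+1 then (2 * m).+1 else 2 * m
  end.

Local Open Scope ring_scope.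

Definition probx (R : comPzRingType) n (tau : nat -> R) (x : n.-tuple bool) : R :=
  \prod_(i < n) (if tnth x i then tau i else 1 - tau i).

Definition winner_bit (R : fieldType) n (x y : n.-tuple bool) (k : nat) : R :=
  if (DLB y < DLB x)%N then (bit x k)%:R
  else if (DLB x < DLB y)%N then (bit y k)%:R
  else ((bit x k)%:R + (bit y k)%:R) / 2.

Definition cond_prob_winner_bit (R : fieldType) n (tau : nat -> R) (b k : nat) : R :=
  (\sum_(x : n.-tuple bool) \sum_(y : n.-tuple bool)
      if (b <= minn (DLB x) (DLB y))%N then probx tau x * probx tau y * winner_bit R x y k
      else 0) /
  (\sum_(x : n.-tuple bool) \sum_(y : n.-tuple bool)
      if (b <= minn (DLB x) (DLB y))%N then probx tau x * probx tau y else 0).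

Definition pfun (R : comPzRingType) (a b : R) : R :=
  a * (- b ^+ 2 + 3 * b + (b ^+ 2 - 3 * b + 1) * a).

(* Main.v *)
Require Import Defs.
From mathcomp Require Import all_boot all_order all_algebra ring lra zify.
Import Order.TTheory GRing.Theory Num.Theory.
Set Implicit Arguments. Unset Strict Implicit. Unset Printing Implicit Defensive.
Local Open Scope ring_scope.

Definition compat (c : option bool) (t : bool) := if c is Some b then b == t else true.
Definition wt (R : comPzRingType) (b : bool) (p : R) : R := if b then p else 1 - p.
Definition cw (R : comPzRingType) (c : option bool) (p : R) : R :=
  if c is Some b then wt b p else 1.

Lemma sum_constr (R : comPzRingType) n (tau : nat -> R) (c : nat -> option bool) :
  \sum_(x : n.-tuple bool) (if [forall i : 'I_n, compat (c i) (tnth x i)] then probx tau x else 0)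
  = \prod_(i < n) cw (c i) (tau i).
Proof.
have E : forall i : 'I_n, cw (c i) (tau i) =
   \sum_(t : bool) (if compat (c i) t then wt t (tau i) else 0).
  move=> i; rewrite big_bool /=; case: (c i) => [[]|] /=; rewrite ?addr0 ?add0r //.
  by rewrite addrC subrK.
rewrite (eq_bigr _ (fun i _ => E i)) bigA_distr_bigA /=.
rewrite (reindex (fun f : {ffun 'I_n -> bool} => [tuple f i | i < n])) /=; last first.
  apply: onW_bij; exists (fun t : n.-tuple bool => [ffun i => tnth t i]).
  - by move=> f; apply/ffunP => i; rewrite ffunE tnth_mktuple.
  - by move=> t; apply: eq_from_tnth => i; rewrite tnth_mktuple ffunE.
apply: eq_bigr => f _.
case: forallP => H.
  rewrite /probx; apply: eq_bigr => i _; have := H i; rewrite tnth_mktuple => ->.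
  by [].
have [i Hi] : exists i : 'I_n, ~~ compat (c i) (f i).
  apply/existsP; rewrite -negb_forall; apply/negP => /forallP H2; apply: H => i.
  by rewrite tnth_mktuple; exact: H2.
by rewrite (bigD1 i) //= (negbTE Hi) mul0r.
Qed.

Lemma sum_pair (R : comPzRingType) (F : bool * bool -> R) :
  \sum_(u : bool * bool) F u = F (true, true) + F (true, false) + (F (false, true) + F (false, false)).
Proof.
rewrite (eq_bigr (fun p => F (p.1, p.2))); last by case.
by rewrite -(pair_bigA _ (fun a b => F (a, b))) /= !big_bool.
Qed.

Section S.
Variables (R : realFieldType) (n m : nat) (tau : nat -> R).
Hypotheses (hev : ~~ odd n) (hm1 : (1 <= m)%N) (hm : (m <= n./2 - 1)%N).

Lemma hN : n = (n./2).*2.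
Proof. by rewrite -[LHS]odd_double_half (negbTE hev). Qed.

Lemma hmn : ((2 * m).+2 <= n)%N.
Proof. have := hN; lia. Qed.

Definition cpre (i : nat) : option bool := if (i < 2 * m)%N then Some true else None.
Definition cu (u : bool * bool) (i : nat) : option bool :=
  if (i < 2 * m)%N then Some true else if i == 2 * m then Some u.1
  else if i == (2 * m).+1 then Some u.2 else None.
Definition pre (x : n.-tuple bool) := [forall i : 'I_n, compat (cpre i) (tnth x i)].
Definition Iu u (x : n.-tuple bool) := [forall i : 'I_n, compat (cu u i) (tnth x i)].

Lemma bitE (x : n.-tuple bool) (i : 'I_n) : bit x i = tnth x i.
Proof. by rewrite /bit (tnth_nth false). Qed.

Lemma preP x : reflect (forall i, (i < 2 * m)%N -> bit x i) (pre x).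
Proof.
apply: (iffP forallP) => H i.
  move=> hi; have hin : (i < n)%N by have := hmn; lia.
  have := H (Ordinal hin); rewrite /cpre /= hi /= -bitE.
  by case: bit.
rewrite /cpre; case: ifP => // hi /=.
by rewrite -bitE H.
Qed.

Lemma IuE u x : Iu u x = [&& pre x, bit x (2 * m) == u.1 & bit x (2 * m).+1 == u.2].
Proof.
have h0 : (2 * m < n)%N by have := hmn; lia.
have h1 : ((2 * m).+1 < n)%N by have := hmn; lia.
apply/idP/idP.
  move/forallP => H; apply/and3P; split.
  - apply/forallP => i; have := H i; rewrite /cpre /cu; case: ifP => //.
  - have := H (Ordinal h0); rewrite /cu /= ltnn eqxx /= -bitE /= => /eqP ->.
    by rewrite eqxx.
  - have := H (Ordinal h1); rewrite /cu /= ltnNge leqnSn /= eqSS.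
    rewrite (_ : ((2 * m).+1 == 2 * m) = false); last by lia.
    by rewrite eqxx /= -bitE => /eqP ->.
case/and3P => /forallP H e1 e2; apply/forallP => i; rewrite /cu.
case: ifP => hi.
  by have := H i; rewrite /cpre hi.
case: eqP => e.
  by rewrite /= -bitE e eq_sym.
case: eqP => e' //.
by rewrite /= -bitE e' eq_sym.
Qed.

Lemma hN2 : n./2 = m + (n./2 - m - 1).+1.
Proof. lia. Qed.

Lemma dlb_pre x : pre x ->
  if bit x (2 * m) && bit x (2 * m).+1 then ((2 * m).+2 <= DLB x)%N
  else DLB x == (if ~~ bit x (2 * m) && ~~ bit x (2 * m).+1 then (2 * m).+1 else (2 * m))%N.
Proof.
move/preP => H.
rewrite /DLB /nonfull_blocks hN2 iotaD filter_cat add0n.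
have -> : [seq l <- iota 0 m | ~~ (bit x (2 * l) && bit x (2 * l).+1)] = [::].
  rewrite -(filter_pred0 (iota 0 m)); apply: eq_in_filter => l.
  rewrite mem_iota => /andP [_ hl] /=.
  by rewrite !H //; lia.
rewrite /=.
case hb : (bit x (2 * m) && bit x (2 * m).+1) => /=; last by [].
case E : [seq _ <- _ | _] => [|h t].
  by have := hmn; lia.
have : h \in iota m.+1 (n./2 - m - 1).
  have : h \in h :: t by rewrite mem_head.
  by rewrite -E mem_filter => /andP [_ ->].
rewrite mem_iota => /andP [hh _].
case: ifP => _; lia.
Qed.

Lemma dlb_npre x : ~~ pre x -> (DLB x < 2 * m)%N.
Proof.
move=> hp.
have : ~~ all (fun i => bit x i) (iota 0 (2 * m)).
  apply: contra hp => /allP H; apply/preP => i hi; apply: H; rewrite mem_iota; lia.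
case/allPn => i; rewrite mem_iota => /andP [_ hi] hb.
have hi2 := odd_double_half i.
have pl : ~~ (bit x (2 * i./2) && bit x (2 * i./2).+1).
  move: hi2; case: (odd i) => /= hi2.
    have -> : (2 * i./2).+1 = i by lia.
    by rewrite (negbTE hb) andbF.
  have -> : (2 * i./2)%N = i by lia.
  by rewrite (negbTE hb).
have hl : (i./2 < m)%N by move: hi2; case: (odd i) => /= hi2; lia.
rewrite /DLB /nonfull_blocks hN2 iotaD filter_cat add0n.
case E : [seq l <- iota 0 m | ~~ (bit x (2 * l) && bit x (2 * l).+1)] => [|h t].
  have : i./2 \in [seq l <- iota 0 m | ~~ (bit x (2 * l) && bit x (2 * l).+1)].
    by rewrite mem_filter pl mem_iota; lia.
  by rewrite E.
have : h \in [seq l <- iota 0 m | ~~ (bit x (2 * l) && bit x (2 * l).+1)] by rewrite E mem_head.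
rewrite mem_filter mem_iota => /andP [_ /andP [_ hh]].
rewrite /=; case: ifP => ?; lia.
Qed.


Definition rank (u : bool * bool) : nat :=
  if u.1 && u.2 then 2 else if ~~ u.1 && ~~ u.2 then 1 else 0.
Definition G (u v : bool * bool) : R :=
  if (rank v < rank u)%N then (u.1 : nat)%:R
  else if (rank u < rank v)%N then (v.1 : nat)%:R
  else ((u.1 : nat)%:R + (v.1 : nat)%:R) / 2.

Lemma wbE x y : pre x -> pre y ->
  winner_bit R x y (2 * m) = G (bit x (2 * m), bit x (2 * m).+1) (bit y (2 * m), bit y (2 * m).+1).
Proof.
move=> /dlb_pre hx /dlb_pre hy; rewrite /winner_bit /G /rank /=.
move: hx hy.
case: (bit x (2 * m)) (bit x (2 * m).+1) (bit y (2 * m)) (bit y (2 * m).+1) => [] [] [] [] /= hx hy;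
  try move/eqP: hx => hx; try move/eqP: hy => hy;
  case: (ltnP (DLB y) (DLB x)) => h1; case: (ltnP (DLB x) (DLB y)) => h2 //=; try lia.
all: by rewrite divff // (_ : 1 + 1 = 2%:R) // pnatr_eq0.
Qed.


Lemma dlb_ge x : pre x -> (2 * m <= DLB x)%N.
Proof.
move/dlb_pre; case: ifP => _; first lia.
by move/eqP ->; case: ifP => _; lia.
Qed.

Lemma pointE x y :
  (if (2 * m <= minn (DLB x) (DLB y))%N then probx tau x * probx tau y * winner_bit R x y (2 * m) else 0)
  = \sum_(u : bool * bool) \sum_(v : bool * bool)
      (if Iu u x then probx tau x else 0) * (if Iu v y then probx tau y else 0) * G u v.
Proof.
under eq_bigr => u _ do under eq_bigr => v _ do rewrite !IuE.
case hpx : (pre x); last first.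
  have := dlb_npre (negbT hpx) => h.
  rewrite ifF; last by apply/negbTE; lia.
  by rewrite big1 // => u _; rewrite big1 // => v _; rewrite /= !mul0r.
case hpy : (pre y); last first.
  have := dlb_npre (negbT hpy) => h.
  rewrite ifF; last by apply/negbTE; lia.
  by rewrite big1 // => u _; rewrite big1 // => v _; rewrite /= mulr0 mul0r.
have hx := dlb_pre hpx; have hy := dlb_pre hpy.
rewrite ifT; last first.
  have := dlb_ge hpx; have := dlb_ge hpy; lia.
rewrite wbE // !sum_pair /=.
case: (bit x (2 * m)) (bit x (2 * m).+1) (bit y (2 * m)) (bit y (2 * m).+1) => [] [] [] [] /=;
  ring.
Qed.


Definition T := \prod_(i < n) cw (cpre i) (tau i).

Lemma S_E u : \sum_(x : n.-tuple bool) (if Iu u x then probx tau x else 0)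
  = T * wt u.1 (tau (2 * m)%N) * wt u.2 (tau (2 * m).+1).
Proof.
have h0 : (2 * m < n)%N by have := hmn; lia.
have h1 : ((2 * m).+1 < n)%N by have := hmn; lia.
rewrite /Iu sum_constr /T.
have ne : Ordinal h1 != Ordinal h0 by rewrite -val_eqE /=; lia.
have split2 : forall F : 'I_n -> R, \prod_(i < n) F i =
    F (Ordinal h0) * (F (Ordinal h1) * \prod_(i < n | (i != Ordinal h0) && (i != Ordinal h1)) F i).
  move=> F; rewrite (bigD1 (Ordinal h0)) //= (bigD1 (Ordinal h1)) //=.
rewrite (split2 (fun i => cw (cu u i) (tau i))) (split2 (fun i => cw (cpre i) (tau i))).
rewrite (eq_bigr (fun i : 'I_n => cw (cpre i) (tau i))); last first.
  move=> i /andP [ne0 ne1]; rewrite /cu /cpre; case: ifP => // _.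
  rewrite ifF; last by apply/negbTE; move: ne0; rewrite -val_eqE.
  by rewrite ifF //; apply/negbTE; move: ne1; rewrite -val_eqE.
rewrite /cu /cpre /= ltnn eqxx ltnNge leqnSn /= eqxx.
rewrite (_ : ((2 * m).+1 == 2 * m) = false); last by lia.
by case: u => [a b] /=; ring.
Qed.

Lemma den_E : \sum_(x : n.-tuple bool) (if pre x then probx tau x else 0) = T.
Proof. by rewrite /pre sum_constr. Qed.


Lemma n4 : (4 <= n)%N.
Proof. have := hN; lia. Qed.

Lemma tbounds : 0 < n%:R^-1 :> R /\ n%:R^-1 <= 4^-1 :> R.
Proof.
have h4 : (4 : R) <= n%:R by rewrite ler_nat n4.
have hn0 : (n%:R : R) != 0 by rewrite pnatr_eq0; have := n4; lia.
have e : n%:R^-1 * n%:R = 1 :> R by rewrite mulVf.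
have p : 0 < n%:R^-1 :> R by rewrite invr_gt0; lra.
split => //.
rewrite lef_pV2 ?posrE //; lra.
Qed.

Hypothesis htau : forall i, (i < n)%N -> tau i \in [:: n%:R^-1; 2^-1; 1 - n%:R^-1].

Lemma tau_pos i : (i < n)%N -> 0 < tau i.
Proof.
move/htau; have [t0 t4] := tbounds.
rewrite !inE => /or3P [/eqP->|/eqP->|/eqP->]; lra.
Qed.

Lemma T_neq0 : T != 0.
Proof.
rewrite /T prodf_seq_neq0; apply/allP => i _ /=; rewrite /cpre; case: ifP => hi /=.
  by have := tau_pos (ltn_ord i); lra.
exact: oner_neq0.
Qed.

Lemma main_eq : cond_prob_winner_bit n tau (2 * m) (2 * m) = pfun (tau (2 * m)%N) (tau (2 * m).+1).
Proof.
rewrite /cond_prob_winner_bit.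
have -> : \sum_(x : n.-tuple bool) \sum_(y : n.-tuple bool)
   (if (2 * m <= minn (DLB x) (DLB y))%N then probx tau x * probx tau y * winner_bit R x y (2 * m) else 0)
  = \sum_(u : bool * bool) \sum_(v : bool * bool)
     G u v * (T * wt u.1 (tau (2 * m)%N) * wt u.2 (tau (2 * m).+1))
           * (T * wt v.1 (tau (2 * m)%N) * wt v.2 (tau (2 * m).+1)).
  under eq_bigr => x _ do under eq_bigr => y _ do rewrite pointE.
  under eq_bigr => x _ do rewrite exchange_big.
  under eq_bigr => x _ do under eq_bigr => u _ do rewrite exchange_big.
  rewrite exchange_big; apply: eq_bigr => u _.
  rewrite exchange_big; apply: eq_bigr => v _.
  rewrite -!S_E -mulrA big_distrlr /= mulr_sumr; apply: eq_bigr => x _.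
  rewrite mulr_sumr; apply: eq_bigr => y _.
  by rewrite mulrC.
have -> : \sum_(x : n.-tuple bool) \sum_(y : n.-tuple bool)
   (if (2 * m <= minn (DLB x) (DLB y))%N then probx tau x * probx tau y else 0) = T * T.
  rewrite -den_E big_distrlr /=; apply: eq_bigr => x _; apply: eq_bigr => y _.
  case hpx : (pre x); last first.
    by have := dlb_npre (negbT hpx) => h; rewrite ifF ?mul0r //; apply/negbTE; lia.
  case hpy : (pre y); last first.
    by have := dlb_npre (negbT hpy) => h; rewrite ifF ?mulr0 //; apply/negbTE; lia.
  by rewrite ifT //; have := dlb_ge hpx; have := dlb_ge hpy; lia.
rewrite !sum_pair /G /rank /= /pfun.
have := T_neq0 => hT.
by field.
Qed.

End S.

Unset Implicit Arguments.
Lemma ineq1 (R : realFieldType) (a b : R) : 0 <= a -> a <= 1 -> 1 <= 2 * b -> b <= 1 -> a <= pfun a b.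
Proof.
move=> a0 a1 b0 b1.
have h1 : 0 <= a * (1 - a) by nra.
have h2 : 0 <= - b ^+ 2 + 3 * b - 1 by nra.
have h3 := mulr_ge0 h1 h2.
have -> : pfun a b = a + a * (1 - a) * (- b ^+ 2 + 3 * b - 1) by rewrite /pfun; ring.
lra.
Qed.

Lemma ineq2 (R : realFieldType) (b : R) : 1 <= 2 * b -> b <= 1 -> 9 / 16 <= pfun (2^-1) b.
Proof.
move=> b0 b1. rewrite /pfun. nra.
Qed.

Lemma memb (R : realFieldType) (n : nat) (b : R) : 0 < n%:R^-1 :> R -> n%:R^-1 <= 4^-1 :> R ->
  b \in [:: 2^-1; 1 - n%:R^-1] -> 1 <= 2 * b /\ b <= 1 /\ 0 <= b.
Proof.
move=> t0 t4; rewrite !inE => /orP [/eqP->|/eqP->]; lra.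
Qed.

Theorem lemma21 (R : realFieldType) (n m : nat) (tau : nat -> R) :
  ~~ odd n -> (1 <= m)%N -> (m <= n./2 - 1)%N ->
  (forall i, (i < n)%N -> tau i \in [:: n%:R^-1; 2^-1; 1 - n%:R^-1]) ->
  [/\ cond_prob_winner_bit n tau (2 * m)%N (2 * m)%N = pfun (tau (2 * m)%N) (tau (2 * m).+1),
      tau (2 * m)%N \in [:: 2^-1; 1 - n%:R^-1] -> tau (2 * m).+1 \in [:: 2^-1; 1 - n%:R^-1] ->
        tau (2 * m)%N <= pfun (tau (2 * m)%N) (tau (2 * m).+1)
    & tau (2 * m)%N = 2^-1 -> tau (2 * m).+1 \in [:: 2^-1; 1 - n%:R^-1] ->
        9 / 16 <= pfun (tau (2 * m)%N) (tau (2 * m).+1)].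
Proof.
move=> hev hm1 hm htau.
have [t0 t4] := tbounds R hev hm1 hm.
split.
- exact: main_eq.
- move=> /(@memb R n _ t0 t4) [a1 [a2 a3]] /(@memb R n _ t0 t4) [b1 [b2 b3]].
  exact: ineq1.
- move=> -> /(@memb R n _ t0 t4) [b1 [b2 b3]].
  exact: ineq2.
Qed.
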